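(* Let $(X,d_X)$ be a compact metric space and $\{U_i\}_{i=1}^N$ a finite open cover of $X$. Suppose that for each $i$ there are a map $f_i:U_i\to X$ and constants $L_i>1$, $\alpha_i\ge1$, $C_i>0$ such that for all $x,y,z\in U_i$ with $x\ne y$, $x\ne z$: (1) $d_X(f_i(x),f_i(y))\ge L_i\,d_X(x,y)$; (2) $\frac{d_X(f_i(x),f_i(y))}{d_X(x,y)}-\frac{d_X(f_i(x),f_i(z))}{d_X(x,z)}\le C_i\operatorname{diam}(\{x,y,z\})^{\alpha_i}$. Then $X$ is quasi-self-similar.
   Context: A metric space $X$ is ($H$-)quasi-self-similar if there exist $r_0>0$ and $H\ge1$ such that for every ball $B$ of radius $r<r_0$ there is a map $f_B:B\to X$ with $\frac1H\frac{r_0}{r}d_X(x,y)\le d_X(f_B(x),f_B(y))\le H\frac{r_0}{r}d_X(x,y)$ for all $x,y\in B$. *)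

(* Defs.v *)
From Stdlib Require Import Reals List.
Open Scope R_scope.

Definition is_metric {T : Type} (d : T -> T -> R) : Prop :=
  (forall x y, 0 <= d x y) /\
  (forall x y, d x y = 0 <-> x = y) /\
  (forall x y, d x y = d y x) /\
  (forall x y z, d x z <= d x y + d y z).

Definition metric_open {T : Type} (d : T -> T -> R) (U : T -> Prop) : Prop :=
  forall x, U x -> exists e, 0 < e /\ forall y, d x y < e -> U y.

Definition compact_space {T : Type} (d : T -> T -> R) : Prop :=
  forall (I : Type) (V : I -> T -> Prop),
    (forall i, metric_open d (V i)) ->
    (forall x, exists i, V i x) ->
    exists l : list I, forall x, exists i, In i l /\ V i x.

Definition mball {T : Type} (d : T -> T -> R) (c : T) (r : R) (x : T) : Prop :=
  d c x < r.

Definition diam3 {T : Type} (d : T -> T -> R) (x y z : T) : R :=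
  Rmax (d x y) (Rmax (d x z) (d y z)).

Definition quasi_self_similar {T : Type} (d : T -> T -> R) : Prop :=
  exists r0 H : R, 0 < r0 /\ 1 <= H /\
    forall (c : T) (r : R), 0 < r -> r < r0 ->
      exists fB : T -> T,
        forall x y, mball d c r x -> mball d c r y ->
          (1 / H) * (r0 / r) * d x y <= d (fB x) (fB y) /\
          d (fB x) (fB y) <= H * (r0 / r) * d x y.

(* Main.v *)
Require Import Defs.
From Stdlib Require Import Reals List Lra Lia Classical.
Open Scope R_scope.

Lemma Rpower_le_self t a : 0 < t -> t <= 1 -> 1 <= a -> Rpower t a <= t.
Proof.
  intros Ht Ht1 Ha.
  replace a with (1 + (a - 1)) by ring.
  rewrite Rpower_plus, Rpower_1 by lra.
  assert (H1 : Rpower t (a - 1) <= Rpower 1 (a - 1)) by (apply Rle_Rpower_l; lra).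
  assert (H2 : Rpower 1 (a - 1) = 1) by (unfold Rpower; rewrite ln_1, Rmult_0_r; apply exp_0).
  assert (H3 : 0 < Rpower t (a - 1)) by (unfold Rpower; apply exp_pos).
  rewrite H2 in H1. nra.
Qed.

Lemma list_bound {A : Type} (l : list A) (P : A -> R -> Prop) :
  (forall a x y, P a x -> x <= y -> P a y) ->
  (forall a, In a l -> exists x, P a x) ->
  exists x, 1 <= x /\ forall a, In a l -> P a x.
Proof.
  intros Hm. induction l as [|a l IH]; intros H.
  - exists 1. split; [lra| intros a []].
  - destruct (H a (or_introl eq_refl)) as [x Hx].
    destruct IH as [y [Hy1 Hy]]. { intros b Hb; apply H; right; exact Hb. }
    exists (Rmax 1 (Rmax x y)). split. apply Rmax_l.
    intros b [<-|Hb].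
    + apply Hm with x; auto. eapply Rle_trans; [apply Rmax_l|apply Rmax_r].
    + apply Hm with y; auto. eapply Rle_trans; [apply Rmax_r|apply Rmax_r].
Qed.

Lemma list_min_pos {A : Type} (l : list A) (h : A -> R) :
  (forall a, In a l -> 0 < h a) ->
  exists m, 0 < m /\ forall a, In a l -> m <= h a.
Proof.
  induction l as [|a l IH]; intros H.
  - exists 1. split; [lra| intros a []].
  - destruct IH as [m [Hm1 Hm]]. { intros b Hb; apply H; right; exact Hb. }
    exists (Rmin (h a) m). split. apply Rmin_pos; auto. apply H; left; auto.
    intros b [<-|Hb]. apply Rmin_l. eapply Rle_trans; [apply Rmin_r|apply Hm; auto].
Qed.

Lemma ball_open {T} (d : T -> T -> R) c r : is_metric d -> metric_open d (mball d c r).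
Proof.
  intros (Hp & Hz & Hs & Ht) x Hx. unfold mball in *.
  exists (r - d c x). split; [lra|]. intros y Hy. specialize (Ht c x y). lra.
Qed.

Lemma bounded_space {T} (d : T -> T -> R) : is_metric d -> compact_space d ->
  exists D, forall a b, d a b <= D.
Proof.
  intros Hm Hc. destruct (classic (exists x0 : T, True)) as [[x0 _]|Hne].
  2: { exists 0. intros a. exfalso. apply Hne. exists a. auto. }
  destruct (Hc nat (fun n => mball d x0 (2 ^ n))) as [l Hl].
  - intros n. apply ball_open; auto.
  - intros x. destruct (Pow_x_infinity 2) with (b := d x0 x + 1) as [n Hn].
    { rewrite Rabs_pos_eq; lra. }
    exists n. specialize (Hn n (le_n n)). rewrite Rabs_pos_eq in Hn.
    unfold mball; lra. apply pow_le; lra.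
  - destruct (list_bound l (fun n M => 2 ^ n <= M)) as [M [_ HM]].
    { intros; lra. } { intros n _. exists (2 ^ n). lra. }
    exists (2 * M). intros a b.
    destruct (Hl a) as [n [Hn Ha]]. destruct (Hl b) as [k [Hk Hb]].
    unfold mball in *. pose proof (HM _ Hn). pose proof (HM k Hk).
    destruct Hm as (Hp & Hz & Hs & Ht). specialize (Ht a x0 b). pose proof (Hs a x0).
    lra.
Qed.

Lemma lebesgue {T} (d : T -> T -> R) N (U : nat -> T -> Prop) :
  is_metric d -> compact_space d ->
  (forall i, (i < N)%nat -> metric_open d (U i)) ->
  (forall x, exists i, (i < N)%nat /\ U i x) ->
  exists delta, 0 < delta /\ forall x, exists i, (i < N)%nat /\
     forall y, d x y < delta -> U i y.
Proof.
  intros Hm Hc HU Hcov.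
  pose (I := {p : T * R * nat | 0 < snd (fst p) /\ (snd p < N)%nat /\
      forall y, d (fst (fst p)) y < 2 * snd (fst p) -> U (snd p) y}).
  destruct (Hc I (fun p => mball d (fst (fst (proj1_sig p))) (snd (fst (proj1_sig p)))))
    as [l Hl].
  - intros p. apply ball_open; auto.
  - intros x. destruct (Hcov x) as [i [Hi Hx]]. destruct (HU i Hi x Hx) as [e [He Hy]].
    unshelve eexists (exist _ (x, e/2, i) _).
    + simpl. split; [lra| split; auto]. intros y Hy'. apply Hy. lra.
    + simpl. unfold mball. destruct Hm as (Hp & Hz & _). rewrite (proj2 (Hz x x) eq_refl). lra.
  - destruct (list_min_pos l (fun p => snd (fst (proj1_sig p)))) as [m [Hm0 Hmin]].
    { intros p _. destruct p as [[[x e] i] [He Hr]]. simpl. exact He. }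
    exists m. split; auto. intros x. destruct (Hl x) as [[[[z e] i] [He [Hi Hz]]] [Hin Hxz]].
    exists i. split; auto. intros y Hy. apply Hz. simpl in *.
    specialize (Hmin _ Hin). simpl in Hmin. unfold mball in Hxz. simpl in Hxz.
    destruct Hm as (_ & _ & _ & Ht). specialize (Ht z x y). lra.
Qed.

Lemma div_bound a b c D : 0 <= a -> a <= D -> 0 < c -> c <= b -> a / b <= D / c.
Proof.
  intros Ha HaD Hc Hcb. unfold Rdiv.
  apply Rmult_le_compat; try lra.
  - left; apply Rinv_0_lt_compat; lra.
  - apply Rinv_le_contravar; lra.
Qed.

Theorem theorem6p1 (T : Type) (d : T -> T -> R)
  (N : nat) (U : nat -> T -> Prop) (f : nat -> T -> T)
  (L alpha C : nat -> R) :
  is_metric d ->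
  compact_space d ->
  (forall i, (i < N)%nat -> metric_open d (U i)) ->
  (forall x : T, exists i, (i < N)%nat /\ U i x) ->
  (forall i, (i < N)%nat -> 1 < L i /\ 1 <= alpha i /\ 0 < C i) ->
  (forall i, (i < N)%nat -> forall x y z : T,
      U i x -> U i y -> U i z -> x <> y -> x <> z ->
      d (f i x) (f i y) >= L i * d x y /\
      d (f i x) (f i y) / d x y - d (f i x) (f i z) / d x z
        <= C i * Rpower (diam3 d x y z) (alpha i)) ->
  quasi_self_similar d.
Proof.
  intros Hm Hc HU Hcov HL H6.
  pose proof Hm as (Hp & Hz & Hs & Ht).
  assert (Hdd : forall x, d x x = 0) by (intros; apply Hz; auto).
  assert (Hneq : forall x y, x <> y -> 0 < d x y).
  { intros x y Hxy. destruct (Hp x y) as [H|H]; auto. exfalso; apply Hxy; apply Hz; auto. }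
  assert (H2r : forall c u v rho, d c u < rho -> d c v < rho -> d u v < 2 * rho).
  { intros c u v rho Hu Hv. pose proof (Ht u c v). pose proof (Hs u c). lra. }
  destruct (bounded_space d Hm Hc) as [D HD].
  destruct (list_bound (seq 0 N) (fun i K => C i <= K)) as [Kc [HKc1 HKc]].
  { intros; lra. } { intros i _. exists (C i). lra. }
  assert (HK : forall i, (i < N)%nat -> C i <= Kc).
  { intros i Hi. apply HKc. apply in_seq. lia. }
  destruct (list_min_pos (seq 0 N) (fun i => L i - 1)) as [m [Hm0 Hmin]].
  { intros i Hi. apply in_seq in Hi. destruct (HL i ltac:(lia)). lra. }
  set (Lm := 1 + m).
  assert (HLm : forall i, (i < N)%nat -> Lm <= L i).
  { intros i Hi. specialize (Hmin i ltac:(apply in_seq; lia)). unfold Lm; simpl in Hmin; lra. }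
  assert (HLm1 : 1 < Lm) by (unfold Lm; lra).
  clearbody Lm.
  destruct (lebesgue d N U Hm Hc HU Hcov) as [delta [Hdelta Hleb]].
  assert (TL : forall i x y z s, (i < N)%nat -> U i x -> U i y -> U i z -> x <> y -> x <> z ->
     diam3 d x y z <= s -> s <= 1 ->
     d (f i x) (f i y) / d x y - d (f i x) (f i z) / d x z <= Kc * s).
  { intros i x y z s Hi Ux Uy Uz Hxy Hxz Hds Hs1.
    destruct (H6 i Hi x y z Ux Uy Uz Hxy Hxz) as [_ H].
    destruct (HL i Hi) as (_ & Ha & HC).
    assert (Hd0 : 0 < diam3 d x y z).
    { unfold diam3. eapply Rlt_le_trans; [apply (Hneq _ _ Hxy)| apply Rmax_l]. }
    pose proof (Rpower_le_self (diam3 d x y z) (alpha i) Hd0 ltac:(lra) Ha).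
    pose proof (HK i Hi).
    assert (0 < Rpower (diam3 d x y z) (alpha i)) by (unfold Rpower; apply exp_pos).
    nra. }
  assert (Hratio : forall i x y, (i < N)%nat -> U i x -> U i y -> x <> y ->
     Lm <= d (f i x) (f i y) / d x y).
  { intros i x y Hi Ux Uy Hxy. destruct (H6 i Hi x y y Ux Uy Uy Hxy Hxy) as [H _].
    pose proof (Hneq _ _ Hxy). pose proof (HLm i Hi).
    apply Rmult_le_reg_r with (d x y); auto. unfold Rdiv.
    rewrite Rmult_assoc, Rinv_l by lra. nra. }
  assert (LL : forall i c' rho x y x' y', (i < N)%nat -> 0 < rho -> 2 * rho <= 1 ->
     (forall y, d c' y < rho -> U i y) ->
     d c' x < rho -> d c' y < rho -> d c' x' < rho -> d c' y' < rho -> x <> y -> x' <> y' ->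
     d (f i x) (f i y) / d x y <= d (f i x') (f i y') / d x' y' + 4 * Kc * rho).
  { intros i c' rho x y x' y' Hi Hrho Hrho1 HUc Hx Hy Hx' Hy' Hxy Hx'y'.
    assert (T3 : forall a b e, d c' a < rho -> d c' b < rho -> d c' e < rho -> a <> b -> a <> e ->
       d (f i a) (f i b) / d a b - d (f i a) (f i e) / d a e <= Kc * (2 * rho)).
    { intros a b e Ha Hb He Hab Hae. apply TL; auto.
      unfold diam3. pose proof (H2r c' a b rho Ha Hb). pose proof (H2r c' a e rho Ha He).
      pose proof (H2r c' b e rho Hb He).
      apply Rmax_lub; [lra|]. apply Rmax_lub; lra. }
    destruct (classic (x = x')) as [<-|Hxx'].
    - pose proof (T3 x y y' Hx Hy Hy' Hxy Hx'y'). nra.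
    - pose proof (T3 x y x' Hx Hy Hx' Hxy Hxx').
      pose proof (T3 x' x y' Hx' Hx Hy' (not_eq_sym Hxx') Hx'y').
      assert (Heq: d (f i x) (f i x') / d x x' = d (f i x') (f i x) / d x' x)
        by (rewrite (Hs x x'), (Hs (f i x) (f i x')); reflexivity).
      nra. }
  set (c1 := 16 * Kc / (Lm * (Lm - 1))).
  assert (Hc1pos : 0 < c1).
  { unfold c1. apply Rdiv_lt_0_compat; nra. }
  assert (Hc1eq : c1 * (Lm - 1) * Lm = 16 * Kc).
  { unfold c1. field. lra. }
  clearbody c1.
  assert (Hth : exists theta, 0 < theta /\ 4 * theta <= delta /\ 8 * theta <= 1 /\
     c1 * theta <= 1 /\ 8 * Kc * theta <= Lm).
  { set (t := Rmin (Rmin (delta/4) (1/8)) (Rmin (/c1) (Lm/(8*Kc)))).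
    assert (Ht1 : t <= delta / 4 /\ t <= 1/8 /\ t <= /c1 /\ t <= Lm/(8*Kc)).
    { unfold t. repeat split.
      - eapply Rle_trans; [apply Rmin_l|apply Rmin_l].
      - eapply Rle_trans; [apply Rmin_l|apply Rmin_r].
      - eapply Rle_trans; [apply Rmin_r|apply Rmin_l].
      - eapply Rle_trans; [apply Rmin_r|apply Rmin_r]. }
    assert (Ht0 : 0 < t).
    { unfold t. apply Rmin_pos; apply Rmin_pos; try lra.
      apply Rinv_0_lt_compat; lra. apply Rdiv_lt_0_compat; lra. }
    exists t. destruct Ht1 as (A1 & A2 & A3 & A4). repeat split; try lra.
    - apply Rle_trans with (c1 * / c1). apply Rmult_le_compat_l; lra.
      rewrite Rinv_r; lra.
    - apply Rle_trans with (8 * Kc * (Lm / (8 * Kc))). apply Rmult_le_compat_l; lra.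
      right. field. lra. }
  destruct Hth as [theta (Hth0 & Hth1 & Hth2 & Hth3 & Hth4)].
  assert (HLam : exists Lam, 1 <= Lam /\ forall i c' p q, (i < N)%nat ->
     (forall y, d c' y < delta -> U i y) -> d c' p < 2*theta -> d c' q < 2*theta -> p <> q ->
     d (f i p) (f i q) / d p q <= Lam).
  { destruct (Hc T (fun x => mball d x theta)) as [l Hl].
    { intros x; apply ball_open; auto. }
    { intros x. exists x. unfold mball. rewrite Hdd. lra. }
    destruct (list_bound l (fun x Lam => forall i c' p q, (i < N)%nat ->
       (forall y, d c' y < delta -> U i y) -> d x c' < theta -> d c' p < 2*theta ->
       d c' q < 2*theta -> p <> q ->
       d (f i p) (f i q) / d p q <= Lam)) as [Lam [HLam1 HLam]].
    { intros a x y H Hxy i c' p q Hi HU' Hac Hp' Hq Hpq.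
      specialize (H i c' p q Hi HU' Hac Hp' Hq Hpq). lra. }
    { intros x _.
      destruct (classic (exists z1 z2, d x z1 < 3*theta /\ d x z2 < 3*theta /\ z1 <> z2))
        as [[z1 [z2 [Hz1 [Hz2 Hz12]]]]|Hno].
      - exists (D / (d z1 z2 / 2) + Kc * 1).
        intros i c' p q Hi HU' Hxc Hp' Hq Hpq.
        pose proof (Hneq _ _ Hz12) as H12.
        assert (Hxp : d x p < 3*theta) by (pose proof (Ht x c' p); lra).
        assert (Hxq : d x q < 3*theta) by (pose proof (Ht x c' q); lra).
        assert (Hzz : exists z, (z = z1 \/ z = z2) /\ d z1 z2 <= 2 * d p z).
        { pose proof (Ht z1 p z2). pose proof (Hs z1 p).
          destruct (Rle_dec (d p z1) (d p z2)); [exists z2|exists z1]; split; auto; lra. }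
        destruct Hzz as [z [Hzz Hpz]].
        assert (Hdz : d x z < 3*theta) by (destruct Hzz; subst; auto).
        assert (Hpz0 : p <> z).
        { intro E; subst z. rewrite Hdd in Hpz. lra. }
        assert (Up : U i p) by (apply HU'; lra).
        assert (Uq : U i q) by (apply HU'; lra).
        assert (Uz : U i z).
        { apply HU'. pose proof (Ht c' x z). pose proof (Hs x c'). lra. }
        assert (Hdiam : diam3 d p q z <= 1).
        { unfold diam3. pose proof (H2r x p q _ Hxp Hxq). pose proof (H2r x p z _ Hxp Hdz).
          pose proof (H2r x q z _ Hxq Hdz).
          apply Rmax_lub; [lra|]. apply Rmax_lub; lra. }
        pose proof (TL i p q z 1 Hi Up Uq Uz Hpq Hpz0 Hdiam ltac:(lra)).
        assert (d (f i p) (f i z) / d p z <= D / (d z1 z2 / 2)).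
        { apply div_bound; auto; lra. }
        lra.
      - exists 1. intros i c' p q Hi HU' Hxc Hp' Hq Hpq. exfalso. apply Hno.
        exists p, q. repeat split; auto.
        + pose proof (Ht x c' p); lra.
        + pose proof (Ht x c' q); lra. }
    exists Lam. split; auto. intros i c' p q Hi HU' Hp' Hq Hpq.
    destruct (Hl c') as [x [Hin Hx]]. eapply HLam; eauto. }
  destruct HLam as [Lam [HLam1 HLam]].
  exists theta, (4 * Lam). split; [lra|split;[lra|]].
  intros c r Hr Hrt.
  assert (Hcc : mball d c r c) by (unfold mball; rewrite Hdd; lra).
  destruct (classic (exists x0 y0, mball d c r x0 /\ mball d c r y0 /\ x0 <> y0))
    as [[x0 [y0 [Hx0 [Hy0 Hxy0]]]]|Hno].
  2: { exists (fun x => x). intros x y Hx Hy.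
       assert (x = y) by (apply NNPP; intro; apply Hno; eauto). subst.
       rewrite Hdd, !Rmult_0_r. lra. }

  assert (Hcl : forall k : nat,
    (exists (g : T -> T) (P : R), theta < P * r /\ P * r <= Lam * theta /\
       forall x y, mball d c r x -> mball d c r y ->
         P * d x y <= 4 * d (g x) (g y) /\ d (g x) (g y) <= 4 * P * d x y) \/
    (exists (g : T -> T) (P b : R), 1 <= b /\ b <= 1 + c1 * r * P /\ Lm ^ k <= P /\
       P * r <= theta /\
       forall x y, mball d c r x -> mball d c r y ->
         P * d x y <= b * d (g x) (g y) /\ d (g x) (g y) <= b * P * d x y)).
  { induction k as [|k IH].
    - right. exists (fun x => x), 1, 1. simpl. split; [lra|]. split. nra.
      split;[lra|]. split;[lra|].
      intros x y _ _. split; lra.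
    - destruct IH as [Hfin|[g [P [b [Hb1 [Hb2 [HP1 [HPr Hg]]]]]]]]; [left; exact Hfin|].
      assert (HLmk : 1 <= Lm ^ k) by (apply pow_R1_Rle; lra).
      assert (HP0 : 0 < P) by lra.
      assert (Hb2' : b <= 2).
      { assert (c1 * r * P <= c1 * theta).
        { rewrite Rmult_assoc. apply Rmult_le_compat_l; lra. }
        lra. }
      set (rho := 2 * (P * r)).
      assert (Hrp : 0 < P * r) by nra.
      destruct (Hleb (g c)) as [i [Hi HUi]].
      assert (Hgc : forall x, mball d c r x -> d (g c) (g x) < rho).
      { intros x Hx. destruct (Hg c x Hcc Hx) as [_ H].
        unfold mball in Hx. pose proof (Hp c x).
        assert (b * P * d c x <= 2 * P * d c x).
        { apply Rmult_le_compat_r; [lra|]. apply Rmult_le_compat_r; lra. }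
        assert (P * d c x < P * r) by (apply Rmult_lt_compat_l; lra).
        unfold rho. lra. }
      assert (Hrho : rho <= 2*theta) by (unfold rho; lra).
      assert (HUr : forall y, d (g c) y < rho -> U i y) by (intros; apply HUi; lra).
      assert (Hgne : forall x y, mball d c r x -> mball d c r y -> x <> y ->
                g x <> g y /\ 0 < d (g x) (g y)).
      { intros x y Hx Hy Hxy. destruct (Hg x y Hx Hy) as [H1 _]. pose proof (Hneq _ _ Hxy).
        assert (0 < d (g x) (g y)) by nra.
        split; auto. intro E; rewrite E, Hdd in *; lra. }
      destruct (Hgne x0 y0 Hx0 Hy0 Hxy0) as [Hgxy0 Hdg0].
      assert (Hlam1 : Lm <= d (f i (g x0)) (f i (g y0)) / d (g x0) (g y0))
        by (apply Hratio; auto; apply HUr; apply Hgc; auto).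
      assert (Hlam2 : d (f i (g x0)) (f i (g y0)) / d (g x0) (g y0) <= Lam).
      { apply (HLam i (g c)); auto.
        - pose proof (Hgc x0 Hx0); lra.
        - pose proof (Hgc y0 Hy0); lra. }
      set (lam := d (f i (g x0)) (f i (g y0)) / d (g x0) (g y0)) in *.
      set (eps := 8 * Kc * (P * r) / Lm).
      assert (HepsL : eps * Lm = 8 * Kc * (P * r)) by (unfold eps; field; lra).
      assert (Heps0 : 0 <= eps) by nra.
      assert (Heps1 : eps <= 1).
      { assert (8 * Kc * (P * r) <= 8 * Kc * theta) by (apply Rmult_le_compat_l; lra).
        nra. }
      assert (Hepsrho : 4 * Kc * rho = eps * Lm) by (unfold rho; lra).
      assert (Hmul : forall x y, mball d c r x -> mball d c r y -> x <> y ->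
         d (f i (g x)) (f i (g y)) / d (g x) (g y) <= lam * (1 + eps) /\
         lam <= d (f i (g x)) (f i (g y)) / d (g x) (g y) * (1 + eps)).
      { intros x y Hx Hy Hxy. destruct (Hgne x y Hx Hy Hxy) as [Hne Hd].
        assert (Hrr : Lm <= d (f i (g x)) (f i (g y)) / d (g x) (g y))
          by (apply Hratio; auto; apply HUr; apply Hgc; auto).
        assert (Hr0 : 0 < rho) by (unfold rho; lra).
        assert (Hr1 : 2 * rho <= 1) by lra.
        pose proof (LL i (g c) rho (g x) (g y) (g x0) (g y0) Hi Hr0 Hr1 HUr
                      (Hgc x Hx) (Hgc y Hy) (Hgc x0 Hx0) (Hgc y0 Hy0) Hne Hgxy0) as LA.
        pose proof (LL i (g c) rho (g x0) (g y0) (g x) (g y) Hi Hr0 Hr1 HUr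
                      (Hgc x0 Hx0) (Hgc y0 Hy0) (Hgc x Hx) (Hgc y Hy) Hgxy0 Hne) as LB.
        change (d (f i (g x0)) (f i (g y0)) / d (g x0) (g y0)) with lam in LA, LB.
        split; nra. }
      assert (Hg' : forall x y, mball d c r x -> mball d c r y ->
         (lam * P) * d x y <= (b * (1 + eps)) * d (f i (g x)) (f i (g y)) /\
         d (f i (g x)) (f i (g y)) <= (b * (1 + eps)) * (lam * P) * d x y).
      { intros x y Hx Hy. destruct (classic (x = y)) as [<-|Hxy].
        { rewrite !Hdd, !Rmult_0_r. lra. }
        destruct (Hmul x y Hx Hy Hxy) as [Hu Hl']. destruct (Hg x y Hx Hy) as [H1 H2].
        destruct (Hgne x y Hx Hy Hxy) as [_ Hd].
        pose proof (Hneq _ _ Hxy).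
        set (G := d (g x) (g y)) in *. set (FG := d (f i (g x)) (f i (g y))) in *.
        set (rr := FG / G) in *.
        assert (HFG : FG = rr * G) by (unfold rr; field; lra).
        assert (Hrr0 : 0 <= rr).
        { unfold rr, Rdiv. apply Rmult_le_pos; [apply Hp|left; apply Rinv_0_lt_compat; lra]. }
        split.
        - assert (lam * P * d x y <= rr * (1 + eps) * (P * d x y)).
          { replace (lam * P * d x y) with (lam * (P * d x y)) by ring.
            apply Rmult_le_compat_r; nra. }
          assert (rr * (1 + eps) * (P * d x y) <= rr * (1 + eps) * (b * G)).
          { apply Rmult_le_compat_l; nra. }
          rewrite HFG. nra.
        - rewrite HFG.
          assert (rr * G <= lam * (1 + eps) * G) by (apply Rmult_le_compat_r; lra).
          assert (lam * (1 + eps) * G <= lam * (1 + eps) * (b * P * d x y)).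
          { apply Rmult_le_compat_l; nra. }
          nra. }
      destruct (Rle_dec (lam * P * r) theta) as [Hle|Hgt].
      + right. exists (fun x => f i (g x)), (lam * P), (b * (1 + eps)).
        split; [nra|]. split.
        { assert (H2e : 2 * eps = c1 * (Lm - 1) * (P * r)).
          { apply Rmult_eq_reg_r with Lm; [|lra].
            replace (2 * eps * Lm) with (2 * (eps * Lm)) by ring. rewrite HepsL.
            replace (c1 * (Lm - 1) * (P * r) * Lm) with (c1 * (Lm - 1) * Lm * (P * r)) by ring.
            rewrite Hc1eq. ring. }
          assert (c1 * r * P * Lm <= c1 * r * P * lam).
          { apply Rmult_le_compat_l; [|lra]. nra. }
          nra. }
        split.
        { simpl. replace (lam * P) with (lam * P) by ring.
          apply Rmult_le_compat; lra. }
        split; [lra|]. exact Hg'.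
      + left. exists (fun x => f i (g x)), (lam * P). split; [lra|]. split.
        { replace (lam * P * r) with (lam * (P * r)) by ring.
          apply Rmult_le_compat; lra. }
        intros x y Hx Hy. destruct (Hg' x y Hx Hy) as [A1 A2].
        pose proof (Hp (f i (g x)) (f i (g y))). pose proof (Hp x y).
        assert (Hb4 : b * (1 + eps) <= 4) by nra.
        split.
        * assert (b * (1 + eps) * d (f i (g x)) (f i (g y)) <= 4 * d (f i (g x)) (f i (g y)))
            by (apply Rmult_le_compat_r; lra).
          lra.
        * assert (b * (1 + eps) * (lam * P) * d x y <= 4 * (lam * P) * d x y).
          { apply Rmult_le_compat_r; [lra|]. apply Rmult_le_compat_r; nra. }
          lra. }
  destruct (Pow_x_infinity Lm) with (b := theta / r + 1) as [k Hk].
  { rewrite Rabs_pos_eq; lra. }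
  specialize (Hk k (le_n k)). rewrite Rabs_pos_eq in Hk by (apply pow_le; lra).
  assert (Hsr : theta / r * r = theta) by (field; lra).
  destruct (Hcl k) as [[g [P [H1 [H2 Hg]]]]|[g [P [b [_ [_ [HP [HPr _]]]]]]]].
  - exists g. intros x y Hx Hy. destruct (Hg x y Hx Hy) as [Hl Hu].
    set (s := theta / r) in *.
    assert (Hs0 : 0 < s) by (unfold s; apply Rdiv_lt_0_compat; lra).
    assert (HsP : s < P) by (apply Rmult_lt_reg_r with r; lra).
    assert (HPs : P <= Lam * s).
    { apply Rmult_le_reg_r with r; [lra|]. rewrite Rmult_assoc, Hsr. lra. }
    pose proof (Hp x y).
    assert (Hq : 1 / (4 * Lam) * s <= P / 4).
    { apply Rmult_le_reg_l with (4 * Lam); [lra|].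
      replace (4 * Lam * (1 / (4 * Lam) * s)) with s by (field; lra).
      nra. }
    split.
    + assert (1 / (4 * Lam) * s * d x y <= P / 4 * d x y) by (apply Rmult_le_compat_r; lra).
      lra.
    + assert (4 * P * d x y <= 4 * Lam * s * d x y).
      { apply Rmult_le_compat_r; lra. }
      lra.
  - exfalso.
    assert ((theta / r + 1) * r <= P * r) by (apply Rmult_le_compat_r; lra).
    nra.
Qed.
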